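(* Let $\Gamma$ be a metric graph and $D$ a vertex-supported effective divisor on $\Gamma$. Then the cell complex $|D|$ has finitely many cells.
   Context: A metric graph $\Gamma=(V,E)$ is a connected undirected graph whose edges have positive real lengths $M_e$. A divisor is a finite formal $\mathbb{Z}$-combination of points of $\Gamma$; effective means all coefficients are $\ge 0$; vertex-supported means its support lies in $V$. A rational function is a continuous function $\Gamma\to\mathbb{R}$ that is piecewise linear on each edge with finitely many pieces and integer slopes; $(f)=\sum_x \mathrm{ord}_x(f)x$, where $\mathrm{ord}_x(f)$ is the sum of outgoing slopes at $x$. $R(D)=\{f: D+(f)\text{ effective}\}$ and $|D|=\{D+(f):f\in R(D)\}$. Cells of $|D|$: identifying each open edge $e$ with $(0,M_e)$, a cell is given by data consisting of nonnegative integers $d_v$ ($v\in V$), ordered partitions $d_e=\sum_{i=1}^{r_e}d_e^i$ into positive integers on some edges $e$, and integers $m_e$ ($e\in E$); $L\in|D|$ lies in the cell iff $L(v)=d_v$ for all $v$, on each edge with a partition $L|_{e^\circ}=\sum_i d_e^i x_i$ with $0<x_1<\dots<x_{r_e}<M_e$, $L$ vanishes on the interiors of the other edges, and every $f\in R(D)$ with $L=D+(f)$ has outgoing slope $m_e$ at the point $0$ of $e$ for every $e$. These cells make $|D|$ a cell complex. *)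

(* Defs.v *)
From mathcomp Require Import all_boot.
From Stdlib Require Import Reals ZArith ClassicalEpsilon.

Set Implicit Arguments.
Unset Strict Implicit.
Unset Printing Implicit Defensive.

Section MetricGraph.

(* A metric graph: finite vertex set V, finite edge set E; each edge e is
   identified with the open interval (0, len e), its point 0 being the
   vertex [src e] and its point [len e] the vertex [tgt e]. *)
Variables (V E : finType) (src tgt : E -> V) (len : E -> R).

Definition adjacent : rel V := fun u v =>
  [exists e : E, ((src e == u) && (tgt e == v)) || ((src e == v) && (tgt e == u))].
Definition connected_graph : Prop := forall u v : V, connect adjacent u v.

(* Points of the metric graph: vertices, and interior points (e, t) with
   0 < t < len e.  Terms [PE e t] with t outside (0, len e) are junk. *)
Inductive pt : Type := PV of V | PE of E & R.

Definition valid_pt (x : pt) : Prop :=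
  match x with PV _ => True | PE e t => (0 < t < len e)%R end.

(* Divisors: integer coefficients on points (only valid points matter). *)
Definition divisor := pt -> Z.
Definition effective (D : divisor) : Prop := forall x, valid_pt x -> (0 <= D x)%Z.
Definition vertex_supported (D : divisor) : Prop := forall e t, D (PE e t) = 0%Z.

Definition pl_int (M : R) (g : R -> R) : Prop :=
  exists (bs : seq R) (ss : seq Z),
    size bs = (size ss).+1 /\ nth 0%R bs 0 = 0%R /\ nth 0%R bs (size ss) = M /\
    forall i, (i < size ss)%nat ->
      (nth 0%R bs i < nth 0%R bs i.+1)%R /\
      forall t, (nth 0%R bs i <= t <= nth 0%R bs i.+1)%R ->
        g t = (g (nth 0%R bs i) + IZR (nth 0%Z ss i) * (t - nth 0%R bs i))%R.

(* A rational function, given by its restrictions f e : [0, len e] -> R to the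
   (closed) edges; continuity at the vertices is the existence of vertex values. *)
Definition rational_fun (f : E -> R -> R) : Prop :=
  (exists h : V -> R, forall e, f e 0%R = h (src e) /\ f e (len e) = h (tgt e)) /\
  forall e, pl_int (len e) (f e).

Definition rslope (g : R -> R) (t : R) : R :=
  epsilon (inhabits 0%R) (fun s => exists eps, (0 < eps)%R /\
     forall h, (0 < h < eps)%R -> g (t + h)%R = (g t + s * h)%R).
Definition lslope (g : R -> R) (t : R) : R :=
  epsilon (inhabits 0%R) (fun s => exists eps, (0 < eps)%R /\
     forall h, (0 < h < eps)%R -> g (t - h)%R = (g t + s * h)%R).

Definition ord (f : E -> R -> R) (x : pt) : R :=
  match x with
  | PV v => (\big[Rplus/0%R]_(e : E | src e == v) rslope (f e) 0%R +
             \big[Rplus/0%R]_(e : E | tgt e == v) lslope (f e) (len e))%R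
  | PE e t => (rslope (f e) t + lslope (f e) t)%R
  end.

Definition is_div_of (D : divisor) (f : E -> R -> R) (L : divisor) : Prop :=
  (forall x, valid_pt x -> IZR (L x) = (IZR (D x) + ord f x)%R) /\
  (forall x, ~ valid_pt x -> L x = 0%Z).

Definition in_RD (D : divisor) (f : E -> R -> R) : Prop :=
  rational_fun f /\
  (forall x, valid_pt x -> (0 <= IZR (D x) + ord f x)%R).

Definition in_linsys (D : divisor) (L : divisor) : Prop :=
  exists f, in_RD D f /\ is_div_of D f L.

Fixpoint pcoef (xs : seq R) (ps : seq nat) (t : R) : Z :=
  match xs, ps with
  | x :: xs', p :: ps' => if Req_EM_T t x then Z.of_nat p else pcoef xs' ps' t
  | _, _ => 0%Z
  end.

(* Cell data: vertex multiplicities d_v, on each edge an ordered partition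
   (d_e^1, ..., d_e^{r_e}) into positive integers (the empty list meaning
   that the edge carries no partition, i.e. L vanishes on its interior),
   and integer slopes m_e. *)
Definition cell_data : Type := ((V -> nat) * (E -> seq nat) * (E -> Z))%type.

Definition in_cell (D : divisor) (c : cell_data) (L : divisor) : Prop :=
  let: (d, p, m) := c in
  in_linsys D L /\
  (forall v, L (PV v) = Z.of_nat (d v)) /\
  (forall e, all (fun k => (0 < k)%nat) (p e) /\
     exists xs : seq R, size xs = size (p e) /\
       (forall i, (i < size xs)%nat -> (0 < nth 0%R xs i)%R /\ (nth 0%R xs i < len e)%R) /\
       (forall i, (i.+1 < size xs)%nat -> (nth 0%R xs i < nth 0%R xs i.+1)%R) /\
       (forall t, (0 < t < len e)%R -> L (PE e t) = pcoef xs (p e) t)) /\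
  (forall f, in_RD D f -> is_div_of D f L -> forall e, rslope (f e) 0%R = IZR (m e)).

Definition cell_nonempty (D : divisor) (c : cell_data) : Prop :=
  exists L, in_cell D c L.

Definition finitely_many_cells (D : divisor) : Prop :=
  exists cs : seq cell_data, forall c, cell_nonempty D c -> List.In c cs.

End MetricGraph.

(* Main.v *)
Require Import Defs.
From HB Require Import structures.
From mathcomp Require Import all_boot zify.
From Stdlib Require Import Reals ZArith Lra Lia Psatz ClassicalEpsilon FunctionalExtensionality.
Local Open Scope R_scope.

Lemma rslope_char g t s eps : 0 < eps ->
  (forall h, 0 < h < eps -> g (t + h) = g t + s * h) -> rslope g t = s.
Proof.
move=> He H; rewrite /rslope.
set P := fun s => _.
have Ps : P s by exists eps.
have [eps' [He' H']] : P (epsilon (inhabits 0) P) by apply: epsilon_spec; exists s.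
set s' := epsilon _ P in He' H' *.
pose h := Rmin eps eps' / 2.
have hpos : 0 < h by rewrite /h; have := Rmin_glb_lt _ _ _ He He'; lra.
have h1 : h < eps by have := Rmin_l eps eps'; rewrite /h; lra.
have h2 : h < eps' by have := Rmin_r eps eps'; rewrite /h; lra.
have E1 := H h (conj hpos h1). have E2 := H' h (conj hpos h2).
apply: (Rmult_eq_reg_r h); lra.
Qed.

Lemma lslope_char g t s eps : 0 < eps ->
  (forall h, 0 < h < eps -> g (t - h) = g t + s * h) -> lslope g t = s.
Proof.
move=> He H; rewrite /lslope.
set P := fun s => _.
have Ps : P s by exists eps.
have [eps' [He' H']] : P (epsilon (inhabits 0) P) by apply: epsilon_spec; exists s.
set s' := epsilon _ P in He' H' *.
pose h := Rmin eps eps' / 2.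
have hpos : 0 < h by rewrite /h; have := Rmin_glb_lt _ _ _ He He'; lra.
have h1 : h < eps by have := Rmin_l eps eps'; rewrite /h; lra.
have h2 : h < eps' by have := Rmin_r eps eps'; rewrite /h; lra.
have E1 := H h (conj hpos h1). have E2 := H' h (conj hpos h2).
apply: (Rmult_eq_reg_r h); lra.
Qed.

Section PL.
Variables (M : R) (g : R -> R).
Hypothesis Mpos : 0 < M.
Hypothesis Hpl : pl_int M g.
Hypothesis HJ : forall t, 0 < t < M -> 0 <= rslope g t + lslope g t.

Lemma pl_main :
  (forall x y, 0 <= x -> x < y -> y <= M -> rslope g x <= - lslope g y) /\
  rslope g 0 * M <= g M - g 0 <= - lslope g M * M.
Proof.
case: Hpl => bs [ss [Hsz [H0 [HM Hp]]]].
set k := size ss in Hsz HM Hp.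
pose B i := nth 0 bs i.
pose S i := IZR (nth 0%Z ss i).
have F1 : forall i j, (i < j <= k)%nat -> B i < B j.
  move=> i j; elim: j => [|j IH] /andP [Hij Hj] //.
  have [Hs _] := Hp j Hj.
  case: (ltngtP i j) => Hc.
  - have := IH (introT andP (conj Hc (ltnW Hj))); rewrite /B; lra.
  - lia.
  - by rewrite Hc.
have kpos : (0 < k)%nat.
  case: (posnP k) => // k0; move: HM H0; rewrite k0 => -> ; lra.
have B0 : B 0%nat = 0 by [].
have Bk : B k = M by [].
have RS : forall i t, (i < k)%nat -> B i <= t < B i.+1 -> rslope g t = S i.
  move=> i t Hi [Ht1 Ht2].
  have [_ Hl] := Hp i Hi.
  apply: (rslope_char _ _ _ (B i.+1 - t)); first lra.
  move=> h [h1 h2].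
  rewrite (Hl (t + h)); last (rewrite /B in Ht1 Ht2 h2; lra).
  rewrite (Hl t); last (rewrite /B in Ht1 Ht2; lra).
  rewrite /S; ring.
have LS : forall i t, (i < k)%nat -> B i < t <= B i.+1 -> lslope g t = - S i.
  move=> i t Hi [Ht1 Ht2].
  have [_ Hl] := Hp i Hi.
  apply: (lslope_char _ _ _ (t - B i)); first lra.
  move=> h [h1 h2].
  rewrite (Hl (t - h)); last (rewrite /B in Ht1 Ht2 h2; lra).
  rewrite (Hl t); last (rewrite /B in Ht1 Ht2; lra).
  rewrite /S; ring.
have Loc : forall t, 0 <= t < M -> exists i, (i < k)%nat /\ B i <= t < B i.+1.
  move=> t [Ht1 Ht2].
  suff : forall n, (n <= k)%nat -> t < B n -> exists i, (i < n)%nat /\ B i <= t < B i.+1.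
    move=> /(_ k (leqnn k)); rewrite Bk => /(_ Ht2) [i [Hi Hb]]; by exists i.
  elim=> [|n IH] Hn Htn; first (rewrite B0 in Htn; lra).
  case: (Rle_lt_dec (B n) t) => Hc.
  - by exists n; split.
  - have [i [Hi Hb]] := IH (ltnW Hn) Hc; exists i; split => //; lia.
have Loc' : forall t, 0 < t <= M -> exists i, (i < k)%nat /\ B i < t <= B i.+1.
  move=> t [Ht1 Ht2].
  suff : forall n, (n <= k)%nat -> t <= B n -> exists i, (i < n)%nat /\ B i < t <= B i.+1.
    move=> /(_ k (leqnn k)); rewrite Bk => /(_ Ht2) [i [Hi Hb]]; by exists i.
  elim=> [|n IH] Hn Htn; first (rewrite B0 in Htn; lra).
  case: (Rlt_le_dec (B n) t) => Hc.
  - by exists n; split.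
  - have [i [Hi Hb]] := IH (ltnW Hn) Hc; exists i; split => //; lia.
have Mono : forall i, (i.+1 < k)%nat -> S i <= S i.+1.
  move=> i Hi.
  have Hb1 : 0 < B i.+1 by rewrite -B0; apply: F1; lia.
  have Hb2 : B i.+1 < M by rewrite -Bk; apply: F1; lia.
  have Hb3 : B i.+1 < B i.+2 by apply: F1; lia.
  have := HJ _ (conj Hb1 Hb2).
  have Hb4 : B i < B i.+1 by apply: F1; lia.
  rewrite (RS i.+1); last by lra. 2: lia.
  rewrite (LS i); last by lra. 2: lia.
  lra.
have MonoG : forall i j, (i <= j)%nat -> (j < k)%nat -> S i <= S j.
  move=> i j; elim: j => [|j IH] Hij Hj.
  - have -> : i = 0%nat by lia. lra.
  - case: (ltngtP i j.+1) => Hc; last (rewrite Hc; lra); last lia.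
    have := IH (ltnSE Hc) (ltnW Hj); have := Mono j Hj; lra.
split.
- move=> x y Hx Hxy Hy.
  have [i [Hi Hbi]] := Loc x (conj Hx (Rlt_le_trans _ _ _ Hxy Hy)).
  have [j [Hj Hbj]] := Loc' y (conj (Rle_lt_trans _ _ _ Hx Hxy) Hy).
  rewrite (RS i) // (LS j) //.
  case: (leqP i j) => Hc; first (have := MonoG i j Hc Hj; lra).
  have : B j.+1 <= B i.
    case: (ltngtP j.+1 i) => Hc'; [have := F1 j.+1 i (introT andP (conj Hc' (ltnW Hi))); lra|lia|rewrite Hc'; lra].
  lra.
- have b01 : B 0%nat < B 1%nat by apply: F1; lia.
  have R0 : rslope g 0 = S 0%nat by apply: RS => //; rewrite B0 in b01; lra.
  have LM : lslope g M = - S k.-1.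
    have -> : M = B k.-1.+1 by rewrite prednK.
    have bk : B k.-1 < B k.-1.+1 by apply: F1; lia.
    apply: LS; first lia.
    lra.
  rewrite R0 LM.
  suff : forall n, (n <= k)%nat -> S 0%nat * B n <= g (B n) - g 0 <= S k.-1 * B n.
    move=> /(_ k (leqnn k)); rewrite Bk; lra.
  elim=> [|n IH] Hn; first (rewrite B0 Rminus_diag; lra).
  have [Hlt Hl] := Hp n Hn.
  have -> : g (B n.+1) = g (B n) + S n * (B n.+1 - B n).
    rewrite {1}/B (Hl (B n.+1)) //; rewrite /B; lra.
  have [IH1 IH2] := IH (ltnW Hn).
  have s1 := MonoG 0%nat n (leq0n n) Hn.
  have s2 := MonoG n k.-1 ltac:(lia) ltac:(lia).
  have d : 0 < B n.+1 - B n by rewrite /B; lra.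
  have := Rmult_le_compat_r _ _ _ (Rlt_le _ _ d) s1.
  have := Rmult_le_compat_r _ _ _ (Rlt_le _ _ d) s2.
  lra.
Qed.
End PL.
Fixpoint incr (u : R) (xs : seq R) : Prop :=
  match xs with [::] => True | x :: xs' => u < x /\ incr x xs' end.

Lemma incr_In u xs : incr u xs -> forall y, List.In y xs -> u < y.
Proof.
elim: xs u => [|x xs IH] u //= [H1 H2] y [<-|Hy] //.
have := IH x H2 y Hy; lra.
Qed.

Lemma nth_incr xs u : (xs <> [::] -> u < nth 0 xs 0) ->
  (forall i, (i.+1 < size xs)%nat -> nth 0 xs i < nth 0 xs i.+1) -> incr u xs.
Proof.
elim: xs u => [|x xs IH] u //= H1 H2; split; first by apply: H1.
apply: IH.
- move=> Hne; have := H2 0%nat; case: xs {H1 H2} Hne => // y ys _ /=; apply; done.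
- move=> i Hi; exact: (H2 i.+1 Hi).
Qed.

Lemma nth_In (P : R -> Prop) xs : (forall i, (i < size xs)%nat -> P (nth 0 xs i)) ->
  forall y, List.In y xs -> P y.
Proof.
elim: xs => [|x xs IH] //= H y [<-|Hy]; first exact: (H 0%nat).
apply: IH => // i Hi; exact: (H i.+1 Hi).
Qed.

Lemma pcoef_sum (M : R) (g : R -> R)
  (key : forall x y, 0 <= x -> x < y -> y <= M -> rslope g x <= - lslope g y) :
  forall xs ps u, size xs = size ps -> incr u xs -> 0 <= u -> u < M ->
  (forall y, List.In y xs -> y < M) ->
  (forall y, List.In y xs -> IZR (pcoef xs ps y) = rslope g y + lslope g y) ->
  INR (sumn ps) <= - lslope g M - rslope g u.
Proof.
elim=> [|x xs IH] [|p ps] u //= Hs Hinc Hu HuM HM HJ.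
- have := key u M Hu HuM (Rle_refl _); lra.
- case: Hinc => Hux Hinc.
  have Hx := HJ x (or_introl erefl).
  simpl in Hx. revert Hx; case: (Req_EM_T x x) => [ex|nx] Hx; last by exfalso; exact (nx erefl).
  have IH' := IH ps x (eq_add_S _ _ Hs) Hinc ltac:(lra) (HM x (or_introl erefl))
     (fun y Hy => HM y (or_intror Hy)).
  have : INR (sumn ps) <= - lslope g M - rslope g x.
    apply: IH' => y Hy; rewrite -(HJ y (or_intror Hy)).
    case: (Req_dec_T y x) => //= Eyx.
    have := incr_In _ _ Hinc _ Hy; rewrite Eyx => H; exfalso; lra.
  have Hk := key u x Hu Hux (Rlt_le _ _ (HM x (or_introl erefl))).
  simpl in Hx. rewrite plus_INR !INR_IZR_INZ. lra.
Qed.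

HB.instance Definition _ := Monoid.isComLaw.Build R 0%R Rplus
  (fun x y z => esym (Rplus_assoc x y z)) Rplus_comm Rplus_0_l.

Lemma In_of_mem (T : eqType) (x : T) (s : seq T) : x \in s -> List.In x s.
Proof.
elim: s => [|y s IH] //; rewrite in_cons => /orP [/eqP ->|H]; [by left|right; exact: IH].
Qed.

Lemma In_nth_ssr (B : Type) (x0 : B) (s : seq B) y :
  List.In y s -> exists i, (i < size s)%nat /\ nth x0 s i = y.
Proof.
elim: s => [|z s IH] //= [<-|H]; first by exists 0%nat.
have [i [Hi Hn]] := IH H; by exists i.+1.
Qed.

Lemma funlist (A : finType) (B : Type) (x0 : B) (s : seq B) :
  exists l : list (A -> B), forall g, (forall a, List.In (g a) s) -> List.In g l.
Proof.
exists (List.map (fun F : {ffun A -> 'I_(size s)} => fun a => nth x0 s (F a))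
   (enum {ffun A -> 'I_(size s)})).
move=> g Hg.
have H : forall a, {i : 'I_(size s) | nth x0 s i = g a}.
  move=> a; apply: constructive_indefinite_description.
  have [i [Hi Hn]] := In_nth_ssr _ x0 _ _ (Hg a); by exists (Ordinal Hi).
pose F := [ffun a => proj1_sig (H a)].
have -> : g = (fun a => nth x0 s (F a)).
  apply: functional_extensionality => a; rewrite ffunE; by rewrite (proj2_sig (H a)).
apply: (List.in_map (fun F : {ffun A -> 'I_(size s)} => fun a => nth x0 s (F a))).
apply: In_of_mem; by rewrite mem_enum.
Qed.

Fixpoint lu (B : Type) (s : seq B) (n : nat) : list (seq B) :=
  match n with
  | 0 => [:: [::]]
  | n'.+1 => [::] :: List.map (fun pr => pr.1 :: pr.2) (List.list_prod s (lu _ s n'))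
  end.

Lemma lu_In (B : Type) (s : seq B) n l : (size l <= n)%nat ->
  (forall x, List.In x l -> List.In x s) -> List.In l (lu _ s n).
Proof.
elim: n l => [|n IH] [|x l] //=; try by left.
move=> Hs Hx; right.
apply: (List.in_map (fun pr : B * seq B => pr.1 :: pr.2) _ (x, l)).
apply: List.in_prod; first by apply: Hx; left.
apply: IH => // y Hy; apply: Hx; by right.
Qed.

Lemma list_bounds (ps : seq nat) N : all (fun k => (0 < k)%nat) ps -> (sumn ps <= N)%nat ->
  (size ps <= N)%nat /\ forall x, List.In x ps -> (x <= N)%nat.
Proof.
elim: ps N => [|p ps IH] N //= /andP [Hp Hps] Hs.
have [H1 H2] := IH (N - p)%nat Hps ltac:(lia).
split; first lia.
move=> x [<-|Hx]; first lia.
have := H2 x Hx; lia.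
Qed.

Lemma sum_le_all (I : finType) (P : pred I) (F : I -> R) c : 0 <= c ->
  (forall i, F i <= c) -> \big[Rplus/0]_(i | P i) F i <= \big[Rplus/0]_(i : I) c.
Proof.
move=> Hc HF; rewrite big_mkcond.
apply: (big_ind2 (fun x y => x <= y)); [lra| move=> x1 x2 y1 y2 H1 H2; change (x1 + y1 <= x2 + y2); lra|].
move=> i _; case: (P i); [exact: HF|lra].
Qed.

Lemma sum_ge0 (I : finType) (P : pred I) (F : I -> R) :
  (forall i, 0 <= F i) -> 0 <= \big[Rplus/0]_(i | P i) F i.
Proof. move=> H; apply: (big_ind (fun x => 0 <= x)) => //; [lra| move=> x1 x2 H1 H2; change (0 <= x1 + x2); lra]. Qed.

Lemma sum_le0 (I : finType) (P : pred I) (F : I -> R) :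
  (forall i, F i <= 0) -> \big[Rplus/0]_(i | P i) F i <= 0.
Proof. move=> H; apply: (big_ind (fun x => x <= 0)) => //; [lra| move=> x1 x2 H1 H2; change (x1 + x2 <= 0); lra]. Qed.

Lemma term_le_sum (I : finType) (F : I -> R) i :
  (forall i, 0 <= F i) -> F i <= \big[Rplus/0]_(j : I) F j.
Proof.
move=> H; rewrite (bigD1 i) //=; have := sum_ge0 _ (fun j => j != i) _ H; lra.
Qed.

Lemma cut (V E : finType) (src tgt : E -> V) (a b : E -> R) (Dv : V -> R) (S : pred V) :
  (forall v, 0 <= Dv v) ->
  (forall v, 0 <= Dv v + (\big[Rplus/0]_(e : E | src e == v) a e +
                          \big[Rplus/0]_(e : E | tgt e == v) b e)) ->
  (forall e, (if S (src e) then a e else 0) + (if S (tgt e) then b e else 0) <= 0) ->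
  forall e, - (\big[Rplus/0]_(v : V) Dv v) <=
            (if S (src e) then a e else 0) + (if S (tgt e) then b e else 0).
Proof.
move=> HD Hv Ht e.
have H1 : 0 <= \big[Rplus/0]_(v | S v) (Dv v + (\big[Rplus/0]_(e : E | src e == v) a e +
                          \big[Rplus/0]_(e : E | tgt e == v) b e)).
  apply: (big_ind (fun x => 0 <= x)) => //; [lra| move=> x1 x2 Ha Hb; change (0 <= x1 + x2); lra].
rewrite big_split /= big_split /= in H1.
have Ex : forall (c : E -> R) (p : E -> V),
   \big[Rplus/0]_(v | S v) \big[Rplus/0]_(e : E | p e == v) c e =
   \big[Rplus/0]_(e : E) (if S (p e) then c e else 0).
  move=> c p.
  under eq_bigr do rewrite big_mkcond.
  rewrite exchange_big; apply: eq_bigr => e' _.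
  case HS: (S (p e')).
  - rewrite (bigD1 (p e')) //= eqxx big1 => [|v /andP [_ Hne]]; first lra.
    by rewrite eq_sym (negbTE Hne).
  - rewrite big1 // => v Hv'; case: eqP => // Heq; by rewrite Heq Hv' in HS.
rewrite !Ex in H1.
have H2 : \big[Rplus/0]_(v | S v) Dv v <= \big[Rplus/0]_(v : V) Dv v.
  rewrite big_mkcond; apply: (big_ind2 (fun x y => x <= y)); [lra| move=> x1 x2 y1 y2 Ha Hb; change (x1 + y1 <= x2 + y2); lra|].
  move=> v _; case: (S v); have := HD v; lra.
rewrite -big_split /= in H1.
rewrite (bigD1 e) //= in H1.
have := sum_le0 _ (fun j => j != e) _ Ht.
lra.
Qed.

Lemma In_map_ssr (A B : Type) (f : A -> B) (x : A) (s : seq A) :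
  List.In x s -> List.In (f x) (map f s).
Proof. elim: s => [|y s IH] //= [->|H]; [by left|right; exact: IH]. Qed.

Lemma nat_bound (x : R) : exists N : nat, x <= INR N.
Proof.
exists (Z.to_nat (up x)).
have [H1 _] := archimed x.
case: (Z_lt_le_dec (up x) 0) => Hc.
- have := IZR_lt _ _ Hc; have := pos_INR (Z.to_nat (up x)); lra.
- rewrite INR_IZR_INZ Z2Nat.id //; lra.
Qed.

Theorem corollary2p7 (V E : finType) (src tgt : E -> V) (len : E -> R)
  (len_pos : forall e, (0 < len e)%R)
  (conn : connected_graph src tgt)
  (D : divisor V E)
  (D_eff : effective len D) (D_vs : vertex_supported D) :
  finitely_many_cells src tgt len D.
Proof.
pose Dv := fun v : V => IZR (D (PV E v)).
have HD : forall v, 0 <= Dv v.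
  move=> v; apply: IZR_le; exact: (D_eff (PV E v) I).
pose Kr := \big[Rplus/0]_(v : V) Dv v.
pose Er := \big[Rplus/0]_(e : E) Kr.
have Kr0 : 0 <= Kr by apply: sum_ge0.
have Er0 : 0 <= Er by apply: sum_ge0.
have [N HN] := nat_bound (Kr + Er + Er).
have [Ld HLd] := funlist V _ 0%nat (iota 0 N.+1).
have [Lp HLp] := funlist E _ [::] (lu _ (iota 0 N.+1) N).
have [Lm HLm] := funlist E _ 0%Z (map (fun n => Z.of_nat n - Z.of_nat N)%Z (iota 0 (N + N).+1)).
exists (List.list_prod (List.list_prod Ld Lp) Lm).
move=> [[d p] m] [L [[f [Hf Hdiv]] [Hd [Hp Hm]]]].
have Hm' := Hm f Hf Hdiv.
case: Hf => [[[h Hh] Hpl] HRD].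
pose a := fun e => rslope (f e) 0.
pose b := fun e => lslope (f e) (len e).
have HJ : forall e t, 0 < t < len e -> 0 <= rslope (f e) t + lslope (f e) t.
  move=> e t Ht; have := HRD (PE V e t) Ht; rewrite D_vs /=; lra.
have PLe := fun e => pl_main _ _ (len_pos e) (Hpl e) (HJ e).
have chord : forall e, a e * len e <= h (tgt e) - h (src e) <= - b e * len e.
  move=> e; have [_ H] := PLe e; case: (Hh e) => E1 E2; rewrite -E1 -E2; exact: H.
have Hv : forall v, 0 <= Dv v + (\big[Rplus/0]_(e : E | src e == v) a e +
                          \big[Rplus/0]_(e : E | tgt e == v) b e).
  move=> v; exact: (HRD (PV E v) I).
have Call := cut _ _ src tgt a b Dv predT HD Hv.
have Call' : forall e, - Kr <= a e + b e.
  move=> e; have := Call _ e; apply => e' /=; have := chord e'; have := len_pos e'.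
  move=> *; nra.
pose Sc := fun c v => if Rle_dec c (h v) then true else false.
have Cth : forall c e, - Kr <= (if Sc c (src e) then a e else 0) + (if Sc c (tgt e) then b e else 0).
  move=> c; apply: (cut _ _ src tgt a b Dv (Sc c) HD Hv) => e.
  have := chord e; have := len_pos e; rewrite /Sc.
  case: (Rle_dec c (h (src e))); case: (Rle_dec c (h (tgt e))) => H1 H2 /= H3 H4; nra.
have aL : forall e, - Kr <= a e.
  move=> e; case: (Rlt_le_dec (h (tgt e)) (h (src e))) => Hc.
  - have := Cth (h (src e)) e; rewrite /Sc.
    case: (Rle_dec (h (src e)) (h (src e))) => H1 /=; last lra.
    case: (Rle_dec (h (src e)) (h (tgt e))) => H2 /=; first lra.
    lra.
  - have := Call' e; have := chord e; have := len_pos e; move=> *; nra.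
have aU : forall e, a e <= Kr.
  move=> e; case: (Rle_lt_dec (h (tgt e)) (h (src e))) => Hc.
  - have := chord e; have := len_pos e; move=> *; nra.
  - have := Cth (h (tgt e)) e; rewrite /Sc.
    case: (Rle_dec (h (tgt e)) (h (tgt e))) => H1 /=; last lra.
    case: (Rle_dec (h (tgt e)) (h (src e))) => H2 /=; first lra.
    have := chord e; have := len_pos e; move=> *; nra.
have bU : forall e, b e <= Kr.
  move=> e; have := chord e; have := len_pos e; have := aL e; move=> *; nra.
apply: List.in_prod; first apply: List.in_prod.
- apply: HLd => v; apply: In_of_mem; rewrite mem_iota /= add0n ltnS.
  have [Hdv _] := Hdiv; have := Hdv (PV E v) I; rewrite Hd /= => H.
  change (IZR (Z.of_nat (d v)) = Dv v + (\big[Rplus/0]_(e | src e == v) a e + \big[Rplus/0]_(e | tgt e == v) b e)) in H.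
  have H1 : Dv v <= Kr by apply: term_le_sum.
  have H2 := sum_le_all _ (fun e => src e == v) a Kr Kr0 aU.
  have H3 := sum_le_all _ (fun e => tgt e == v) b Kr Kr0 bU.
  have : INR (d v) <= INR N.
    rewrite INR_IZR_INZ; rewrite -/Er in H2 H3; lra.
  by move/INR_le/leP.
- apply: HLp => e.
  have [Hpos [xs [Hsz [Hb [Hch HL]]]]] := Hp e.
  have [key _] := PLe e.
  have Hin : forall y, List.In y xs -> 0 < y < len e.
    exact: (nth_In (fun y => 0 < y < len e) xs Hb).
  have Hinc : incr 0 xs.
    apply: nth_incr => // Hne.
    case: xs Hsz Hb Hch HL Hin Hne => // x xs' _ Hb' _ _ _ _.
    have := Hb' 0%nat (ltn0Sn _); rewrite /=; lra.
  have Hsum : INR (sumn (p e)) <= - lslope (f e) (len e) - rslope (f e) 0.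
    apply: (pcoef_sum (len e) (f e) key xs (p e) 0 Hsz Hinc (Rle_refl 0) (len_pos e)).
    - move=> y Hy; have := Hin y Hy; lra.
    - move=> y Hy; rewrite -HL; last exact: Hin.
      have [Hdv _] := Hdiv; rewrite (Hdv (PE V e y) (Hin y Hy)) D_vs /=; ring.
  have Hsn : (sumn (p e) <= N)%nat.
    apply/leP/INR_le; have := Call' e; rewrite /a /b; lra.
  have [Hs1 Hs2] := list_bounds (p e) N Hpos Hsn.
  apply: lu_In => // x Hx; apply: In_of_mem; rewrite mem_iota /= add0n ltnS; exact: Hs2.
- apply: HLm => e.
  have := Hm' e; rewrite -/(a e) => Ha.
  have := aL e; have := aU e; rewrite Ha => H1 H2.
  have HNr : Kr <= IZR (Z.of_nat N) by rewrite -INR_IZR_INZ; lra.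
  have Hb1 := le_IZR _ _ (Rle_trans _ _ _ H1 HNr).
  have Hb2 : (- Z.of_nat N <= m e)%Z by apply: le_IZR; rewrite opp_IZR; lra.
  have E1 : m e = (Z.of_nat (Z.to_nat (m e + Z.of_nat N)) - Z.of_nat N)%Z by lia.
  rewrite E1.
  apply: (In_map_ssr _ _ (fun n => (Z.of_nat n - Z.of_nat N)%Z)); apply: In_of_mem; rewrite mem_iota; apply/andP; split; first by [].
  lia.
Qed.
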